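(* Let $p\le q$, let $\mathcal{E}(d)$ denote the Euclidean group (rigid motions) of $\mathbb{R}^d$, and let $X\subset\mathbb{R}^p$, $Y\subset\mathbb{R}^q$. Let $\mu=\sum_{i=1}^n a_i\delta_{x_i}$ be a discrete measure on $X$ and $\nu=\sum_{j=1}^m b_j\delta_{y_j}$ a discrete measure on $Y$, with $a\in\Delta_n$, $b\in\Delta_m$. Let $\mathcal{F}$ be a class of slicers $f:\mathbb{R}^q\to\mathbb{R}$ and $\mathcal{H}$ a class of measurable liftings $h:\mathbb{R}^p\to\mathbb{R}^q$, and assume they are stable under rigid motions: for all $(f,h)\in\mathcal{F}\times\mathcal{H}$, $g_X\in\mathcal{E}(p)$ and $g_Y\in\mathcal{E}(q)$, \[ f\circ g_Y^{-1}\in\mathcal{F},\qquad g_Y\circ h\circ g_X^{-1}\in\mathcal{H}. \] Then for all $g_X\in\mathcal{E}(p)$ and $g_Y\in\mathcal{E}(q)$, \[ \mathrm{min\text{-}GSGW}(g_{X\#}\mu,g_{Y\#}\nu)=\mathrm{min\text{-}GSGW}(\mu,\nu). \]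
   Context: $\Delta_n$ is the probability simplex in $\mathbb{R}^n$. For discrete measures $\mu=\sum_i a_i\delta_{x_i}$, $\nu=\sum_j b_j\delta_{y_j}$ in Euclidean spaces, let $C^X_{ii'}=\|x_i-x_{i'}\|$ and $C^Y_{jj'}=\|y_j-y_{j'}\|$ be the intra-space Euclidean distance matrices, let $\Pi(a,b)$ be the set of nonnegative $n\times m$ matrices with row sums $a$ and column sums $b$, and define the Gromov--Wasserstein loss \[ \mathcal{L}_{\mathrm{GW}}(\mu,\nu;\pi)=\sum_{i,i',j,j'}\bigl(C^X_{ii'}-C^Y_{jj'}\bigr)^2\pi_{ij}\pi_{i'j'}. \] For $(f,h)\in\mathcal{F}\times\mathcal{H}$, set the one-dimensional values $s_i=f(h(x_i))$ and $t_j=f(y_j)$. The lifted monotone plan $\pi^{\mathrm{mon}}_{f,h}\in\Pi(a,b)$ is obtained by computing the one-dimensional monotone (sorting-based, quantile) coupling between $\sum_i a_i\delta_{s_i}$ and $\sum_j b_j\delta_{t_j}$, where the atoms are indexed by $i$ and $j$ and sorted in nondecreasing order of their values (ties broken by a fixed deterministic rule depending only on the values and indices), and letting $(\pi^{\mathrm{mon}}_{f,h})_{ij}$ be the mass this coupling assigns to the pair of atoms $(s_i,t_j)$. The min Generalized Sliced Gromov--Wasserstein discrepancy is \[ \mathrm{min\text{-}GSGW}(\mu,\nu)=\inf_{f\in\mathcal{F},\,h\in\mathcal{H}}\mathcal{L}_{\mathrm{GW}}\bigl(\mu,\nu;\pi^{\mathrm{mon}}_{f,h}\bigr). \] $g_{\#}$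 denotes push-forward by $g$. *)

(* Defs.v *)
From HB Require Import structures.
From mathcomp Require Import all_boot all_order all_algebra.
From mathcomp Require Import all_classical all_reals.
Set Implicit Arguments. Unset Strict Implicit. Unset Printing Implicit Defensive.
Import Order.TTheory GRing.Theory Num.Theory.
Local Open Scope ring_scope.
Local Open Scope classical_set_scope.

Section Defs.
Variable R : realType.

Definition enorm (d : nat) (v : 'rV[R]_d) : R :=
  Num.sqrt (\sum_(k < d) (v 0 k) ^+ 2).

Definition in_simplex (n : nat) (a : 'I_n -> R) : Prop :=
  (forall i, 0 <= a i) /\ \sum_(i < n) a i = 1.

Definition orthogonal_mx (d : nat) (A : 'M[R]_d) : Prop := A *m A^T = 1%:M.
Definition rigid (d : nat) (A : 'M[R]_d) (b : 'rV[R]_d) : 'rV[R]_d -> 'rV[R]_d :=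
  fun x => x *m A + b.
Definition rigid_inv (d : nat) (A : 'M[R]_d) (b : 'rV[R]_d) : 'rV[R]_d -> 'rV[R]_d :=
  fun x => (x - b) *m A^T.

Definition distmx (d n : nat) (x : 'I_n -> 'rV[R]_d) (i i' : 'I_n) : R :=
  enorm (x i - x i').

Definition GW_loss (p q n m : nat) (x : 'I_n -> 'rV[R]_p) (y : 'I_m -> 'rV[R]_q)
  (pi : 'I_n -> 'I_m -> R) : R :=
  \sum_(i < n) \sum_(i' < n) \sum_(j < m) \sum_(j' < m)
    (distmx x i i' - distmx y j j') ^+ 2 * pi i j * pi i' j'.

Definition before (n : nat) (s : 'I_n -> R) (k i : 'I_n) : bool :=
  (s k < s i) || ((s k == s i) && (k < i)%N).

(* lower end of the quantile interval of atom i in the sorted order *)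
Definition cum_lo (n : nat) (a : 'I_n -> R) (s : 'I_n -> R) (i : 'I_n) : R :=
  \sum_(k < n | before s k i) a k.
Definition cum_hi (n : nat) (a : 'I_n -> R) (s : 'I_n -> R) (i : 'I_n) : R :=
  cum_lo a s i + a i.

(* one-dimensional monotone (quantile) coupling between sum_i a_i delta_{s_i}
   and sum_j b_j delta_{t_j}: mass assigned to (i,j) is the length of the
   overlap of their quantile intervals *)
Definition monotone_plan (n m : nat) (a : 'I_n -> R) (s : 'I_n -> R)
  (b : 'I_m -> R) (t : 'I_m -> R) (i : 'I_n) (j : 'I_m) : R :=
  Num.max 0 (Num.min (cum_hi a s i) (cum_hi b t j)
             - Num.max (cum_lo a s i) (cum_lo b t j)).

Definition lifted_plan (p q n m : nat) (a : 'I_n -> R) (x : 'I_n -> 'rV[R]_p)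
  (b : 'I_m -> R) (y : 'I_m -> 'rV[R]_q)
  (f : 'rV[R]_q -> R) (h : 'rV[R]_p -> 'rV[R]_q) : 'I_n -> 'I_m -> R :=
  monotone_plan a (fun i => f (h (x i))) b (fun j => f (y j)).

Definition min_GSGW (p q n m : nat) (a : 'I_n -> R) (x : 'I_n -> 'rV[R]_p)
  (b : 'I_m -> R) (y : 'I_m -> 'rV[R]_q)
  (F : set ('rV[R]_q -> R)) (H : set ('rV[R]_p -> 'rV[R]_q)) : R :=
  inf [set L | exists f h, F f /\ H h /\ L = GW_loss x y (lifted_plan a x b y f h)].

End Defs.

(* Main.v *)
Require Import Defs.
From HB Require Import structures.
From mathcomp Require Import all_boot all_order all_algebra.
From mathcomp Require Import all_classical all_reals.
Import Order.TTheory GRing.Theory Num.Theory.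
Local Open Scope ring_scope.
Local Open Scope classical_set_scope.
Set Implicit Arguments.

Section S.
Variable R : realType.

Lemma orth_tr d (A : 'M[R]_d) : orthogonal_mx A -> A^T *m A = 1%:M.
Proof. rewrite /orthogonal_mx => h; exact: mulmx1C. Qed.

Lemma orth_trT d (A : 'M[R]_d) : orthogonal_mx A -> orthogonal_mx A^T.
Proof. by move=> h; rewrite /orthogonal_mx trmxK; apply: orth_tr. Qed.

Lemma rigidK d (A : 'M[R]_d) b v : orthogonal_mx A -> rigid_inv A b (rigid A b v) = v.
Proof. by move=> h; rewrite /rigid_inv /rigid addrK -mulmxA h mulmx1. Qed.

Lemma rigid_invK d (A : 'M[R]_d) b v : orthogonal_mx A -> rigid A b (rigid_inv A b v) = v.
Proof. by move=> /orth_tr h; rewrite /rigid_inv /rigid -mulmxA h mulmx1 subrK. Qed.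

Lemma rigid_as_inv d (A : 'M[R]_d) b : orthogonal_mx A ->
  rigid A b = rigid_inv A^T (- b *m A^T).
Proof.
move=> h; apply: funext => v; rewrite /rigid /rigid_inv trmxK mulmxBl.
by rewrite -mulmxA (orth_tr h) mulmx1 opprK.
Qed.

Lemma rigid_inv_as d (A : 'M[R]_d) b :
  rigid_inv A b = rigid A^T (- b *m A^T).
Proof. by apply: funext => v; rewrite /rigid /rigid_inv mulmxBl mulNmx. Qed.

Lemma sumsq d (v : 'rV[R]_d) : \sum_(k < d) (v 0 k) ^+ 2 = (v *m v^T) 0 0.
Proof. by rewrite mxE; apply: eq_bigr => k _; rewrite mxE expr2. Qed.

Lemma enormM d (A : 'M[R]_d) v : orthogonal_mx A -> enorm (v *m A) = enorm v.
Proof.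
move=> h; rewrite /enorm !sumsq trmx_mul mulmxA -(mulmxA v) h mulmx1 //.
Qed.

Lemma distmx_rigid d n (A : 'M[R]_d) b (x : 'I_n -> 'rV[R]_d) : orthogonal_mx A ->
  distmx (rigid A b \o x) =2 distmx x.
Proof.
move=> h i i'; rewrite /distmx /= /rigid.
have -> : x i *m A + b - (x i' *m A + b) = (x i - x i') *m A.
  by rewrite mulmxBl opprD addrACA subrr addr0.
exact: enormM.
Qed.

Lemma GW_rigid p q n m (AX : 'M[R]_p) bX (AY : 'M[R]_q) bY x y pi :
  orthogonal_mx AX -> orthogonal_mx AY ->
  GW_loss (n:=n) (m:=m) (rigid AX bX \o x) (rigid AY bY \o y) pi = GW_loss x y pi.
Proof.
move=> hX hY; rewrite /GW_loss.
apply: eq_bigr => i _; apply: eq_bigr => i' _; apply: eq_bigr => j _; apply: eq_bigr => j' _.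
by rewrite distmx_rigid // distmx_rigid.
Qed.
End S.

Theorem proposition2 (R : realType) (p q n m : nat) (hpq : (p <= q)%N)
  (a : 'I_n -> R) (x : 'I_n -> 'rV[R]_p) (b : 'I_m -> R) (y : 'I_m -> 'rV[R]_q)
  (ha : in_simplex a) (hb : in_simplex b)
  (F : set ('rV[R]_q -> R)) (H : set ('rV[R]_p -> 'rV[R]_q))
  (hstab : forall (f : 'rV[R]_q -> R) (h : 'rV[R]_p -> 'rV[R]_q)
             (AX : 'M[R]_p) (bX : 'rV[R]_p) (AY : 'M[R]_q) (bY : 'rV[R]_q),
             orthogonal_mx AX -> orthogonal_mx AY -> F f -> H h ->
             F (f \o rigid_inv AY bY) /\ H (rigid AY bY \o h \o rigid_inv AX bX)) :
  forall (AX : 'M[R]_p) (bX : 'rV[R]_p) (AY : 'M[R]_q) (bY : 'rV[R]_q),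
    orthogonal_mx AX -> orthogonal_mx AY ->
    min_GSGW a (rigid AX bX \o x) b (rigid AY bY \o y) F H = min_GSGW a x b y F H.
Proof.
move=> AX bX AY bY hX hY; rewrite /min_GSGW; congr inf.
apply/seteqP; split => L [f [h [Ff [Hh ->]]]].
- have [F1 H1] := hstab f h _ (- bX *m AX^T) _ (- bY *m AY^T) (orth_trT hX) (orth_trT hY) Ff Hh.
  rewrite -(rigid_as_inv bY hY) -(rigid_as_inv bX hX) -rigid_inv_as in F1 H1.
  exists (f \o rigid AY bY), (rigid_inv AY bY \o h \o rigid AX bX).
  split => //; split => //; rewrite GW_rigid //.
  by rewrite /lifted_plan; congr (GW_loss _ _ (monotone_plan _ _ _ _)); apply: funext => i /=; rewrite rigid_invK.
- have [F1 H1] := hstab f h AX bX AY bY hX hY Ff Hh.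
  exists (f \o rigid_inv AY bY), (rigid AY bY \o h \o rigid_inv AX bX).
  split => //; split => //; rewrite GW_rigid //.
  by rewrite /lifted_plan; congr (GW_loss _ _ (monotone_plan _ _ _ _)); apply: funext => i /=; rewrite !rigidK.
Qed.
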